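(* Let $s\geqslant0$. For every formula $\varphi$ of $TI_s$: if $TI_s\vdash\varphi$, then $TI_s^*\vdash(\bar\varphi)^*$, where $\bar\varphi$ is the universal closure of $\varphi$.
   Context: Language of $TI$: variables $x^n,y^n,z^n,\dots$ of each type $n\geqslant0$; constant $0$ and function symbols $S,+,\cdot$ on type 0; predicates $=_n$ and $\in_n$. Terms of type 0 are built from type-0 variables and $0$ by $S,+,\cdot$; terms of type $n\geqslant1$ are variables. Atomic formulas: $t=_nr$ ($t,r$ of type $n$) and $t\in_n\tau$ ($t$ of type $n$, $\tau$ of type $n+1$). $srt(\varphi)$ is the maximal type of free variables of $\varphi$. $TI$: classical predicate logic with equality and axioms $Sx^0\neq0$, $Sx=Sy\supset x=y$, $x+0=x$, $x+Sy=S(x+y)$, $x\cdot0=0$, $x\cdot Sy=x\cdot y+x$, induction on type 0 for all formulas, comprehension $\exists x^{n+1}\forall z^n(z\in x\equiv\varphi(z))$ for all $\varphi$ with $srt(\varphi)\leqslant n+1$ and $x^{n+1}$ not free in $\varphi$, and extensionality $\forall z^n(z\in x^{n+1}\equiv z\in y^{n+1})\supset x=y$. $TI_s$ is the fragment with all types $\leqslant s$; $TI_s^*$ is $TI_s$ without the extensionality axiom. The relation $x^n\approx_ny^n$: $x^0\approx_0y^0$ is $x=y$; $x^{n+1}\approx_{n+1}y^{n+1}$ is $(\forall z^n\in x)(\exists u^n\in y)(z\approx_nu)\wedge(\forall z^n\in y)(\exists u^n\in x)(z\approx_nu)$. Translation $\varphi\mapsto\varphi^*$: $(t=_n\tau)^*$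 is $t\approx_n\tau$; $(t\in_n\tau)^*$ is $(\exists z^n\in\tau)(z\approx_nt)$; $\bot^*=\bot$; $*$ commutes with $\wedge,\vee,\supset$ and with $\forall x^n,\exists x^n$. *)

(* Defs.v *)
(* Variables are typed de Bruijn indices:
   [Var n i] is the variable of type n with index i; each type has its
   own index space, and a quantifier [All n]/[Ex n] binds index 0 of type n. *)
From Stdlib Require Import Arith Bool List.
Import ListNotations.

Inductive tm : Type :=
| Var  (n i : nat)
| Zero
| Succ (t : tm)
| Plus (t u : tm)
| Mult (t u : tm).

Fixpoint tm_ty (n : nat) (t : tm) : Prop :=
  match t with
  | Var m _ => m = n
  | Zero => n = 0
  | Succ t1 => n = 0 /\ tm_ty 0 t1
  | Plus t1 t2 => n = 0 /\ tm_ty 0 t1 /\ tm_ty 0 t2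
  | Mult t1 t2 => n = 0 /\ tm_ty 0 t1 /\ tm_ty 0 t2
  end.

Inductive form : Type :=
| Eq  (n : nat) (t u : tm)
| Mem (n : nat) (t u : tm)
| Bot
| And (p q : form)
| Or  (p q : form)
| Imp (p q : form)
| All (n : nat) (p : form)
| Ex  (n : nat) (p : form).

Definition Neg (p : form) : form := Imp p Bot.
Definition Iff (p q : form) : form := And (Imp p q) (Imp q p).

Fixpoint wf (s : nat) (p : form) : Prop :=
  match p with
  | Eq n t u => n <= s /\ tm_ty n t /\ tm_ty n u
  | Mem n t u => S n <= s /\ tm_ty n t /\ tm_ty (S n) u
  | Bot => True
  | And p q | Or p q | Imp p q => wf s p /\ wf s q
  | All n p | Ex n p => n <= s /\ wf s p
  end.

Fixpoint lift_tm (m k : nat) (t : tm) : tm :=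
  match t with
  | Var n i => if Nat.eqb n m && Nat.leb k i then Var n (S i) else Var n i
  | Zero => Zero
  | Succ t1 => Succ (lift_tm m k t1)
  | Plus t1 t2 => Plus (lift_tm m k t1) (lift_tm m k t2)
  | Mult t1 t2 => Mult (lift_tm m k t1) (lift_tm m k t2)
  end.

Fixpoint lift (m k : nat) (p : form) : form :=
  match p with
  | Eq n t u => Eq n (lift_tm m k t) (lift_tm m k u)
  | Mem n t u => Mem n (lift_tm m k t) (lift_tm m k u)
  | Bot => Bot
  | And p q => And (lift m k p) (lift m k q)
  | Or p q => Or (lift m k p) (lift m k q)
  | Imp p q => Imp (lift m k p) (lift m k q)
  | All n p => All n (lift m (if Nat.eqb n m then S k else k) p)
  | Ex n p => Ex n (lift m (if Nat.eqb n m then S k else k) p)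
  end.

Fixpoint subst_tm (m k : nat) (r : tm) (t : tm) : tm :=
  match t with
  | Var n i =>
      if Nat.eqb n m then
        (if Nat.eqb i k then r else if Nat.ltb k i then Var n (pred i) else Var n i)
      else Var n i
  | Zero => Zero
  | Succ t1 => Succ (subst_tm m k r t1)
  | Plus t1 t2 => Plus (subst_tm m k r t1) (subst_tm m k r t2)
  | Mult t1 t2 => Mult (subst_tm m k r t1) (subst_tm m k r t2)
  end.

Fixpoint subst (m k : nat) (r : tm) (p : form) : form :=
  match p with
  | Eq n t u => Eq n (subst_tm m k r t) (subst_tm m k r u)
  | Mem n t u => Mem n (subst_tm m k r t) (subst_tm m k r u)
  | Bot => Bot
  | And p q => And (subst m k r p) (subst m k r q)
  | Or p q => Or (subst m k r p) (subst m k r q)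
  | Imp p q => Imp (subst m k r p) (subst m k r q)
  | All n p => All n (subst m (if Nat.eqb n m then S k else k) (lift_tm n 0 r) p)
  | Ex n p => Ex n (subst m (if Nat.eqb n m then S k else k) (lift_tm n 0 r) p)
  end.

Fixpoint occurs_tm (m i : nat) (t : tm) : Prop :=
  match t with
  | Var n j => n = m /\ j = i
  | Zero => False
  | Succ t1 => occurs_tm m i t1
  | Plus t1 t2 | Mult t1 t2 => occurs_tm m i t1 \/ occurs_tm m i t2
  end.

Fixpoint free (m i : nat) (p : form) : Prop :=
  match p with
  | Eq _ t u | Mem _ t u => occurs_tm m i t \/ occurs_tm m i u
  | Bot => False
  | And p q | Or p q | Imp p q => free m i p \/ free m i q
  | All n p | Ex n p => free m (if Nat.eqb n m then S i else i) p
  end.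

(* [fvb m p] : 1 + the largest index of a free type-m variable of p
   (0 if there is none) *)
Fixpoint fvb_tm (m : nat) (t : tm) : nat :=
  match t with
  | Var n i => if Nat.eqb n m then S i else 0
  | Zero => 0
  | Succ t1 => fvb_tm m t1
  | Plus t1 t2 | Mult t1 t2 => Nat.max (fvb_tm m t1) (fvb_tm m t2)
  end.

Fixpoint fvb (m : nat) (p : form) : nat :=
  match p with
  | Eq _ t u | Mem _ t u => Nat.max (fvb_tm m t) (fvb_tm m u)
  | Bot => 0
  | And p q | Or p q | Imp p q => Nat.max (fvb m p) (fvb m q)
  | All n p | Ex n p => if Nat.eqb n m then pred (fvb m p) else fvb m p
  end.

Definition uclose (s : nat) (p : form) : form :=
  fold_right (fun m q => Nat.iter (fvb m p) (All m) q) p (seq 0 (S s)).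

Inductive logax : form -> Prop :=
| LA1 p q : logax (Imp p (Imp q p))
| LA2 p q r : logax (Imp (Imp p (Imp q r)) (Imp (Imp p q) (Imp p r)))
| LA3 p q : logax (Imp (And p q) p)
| LA4 p q : logax (Imp (And p q) q)
| LA5 p q : logax (Imp p (Imp q (And p q)))
| LA6 p q : logax (Imp p (Or p q))
| LA7 p q : logax (Imp q (Or p q))
| LA8 p q r : logax (Imp (Imp p r) (Imp (Imp q r) (Imp (Or p q) r)))
| LA9 p : logax (Imp Bot p)
| LA10 p : logax (Imp (Neg (Neg p)) p)
| LQ1 n p t : tm_ty n t -> logax (Imp (All n p) (subst n 0 t p))
(* q -> forall x q   (x not free in q) *)
| LQ2 n q : logax (Imp q (All n (lift n 0 q)))
| LQ3 n p q : logax (Imp (All n (Imp p q)) (Imp (All n p) (All n q)))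
| LQ4 n p t : tm_ty n t -> logax (Imp (subst n 0 t p) (Ex n p))
(* forall x (p -> q) -> exists x p -> q   (x not free in q) *)
| LQ5 n p q : logax (Imp (All n (Imp p (lift n 0 q))) (Imp (Ex n p) q))
| LE1 n t : tm_ty n t -> logax (Eq n t t)
| LE2 n t u p : tm_ty n t -> tm_ty n u ->
    logax (Imp (Eq n t u) (Imp (subst n 0 t p) (subst n 0 u p))).

Definition x0 := Var 0 0.
Definition y0 := Var 0 1.

Inductive tiax (ext : bool) (s : nat) : form -> Prop :=
| TA_S0 : tiax ext s (Neg (Eq 0 (Succ x0) Zero))
| TA_Sinj : tiax ext s (Imp (Eq 0 (Succ x0) (Succ y0)) (Eq 0 x0 y0))
| TA_plus0 : tiax ext s (Eq 0 (Plus x0 Zero) x0)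
| TA_plusS : tiax ext s (Eq 0 (Plus x0 (Succ y0)) (Succ (Plus x0 y0)))
| TA_mult0 : tiax ext s (Eq 0 (Mult x0 Zero) Zero)
| TA_multS : tiax ext s (Eq 0 (Mult x0 (Succ y0)) (Plus (Mult x0 y0) x0))
(* induction on type 0:  p(0) /\ forall x (p(x) -> p(Sx)) -> forall x p(x),
   where x is the type-0 variable with index 0 of p *)
| TA_ind p : wf s p ->
    tiax ext s (Imp (And (subst 0 0 Zero p)
                         (All 0 (Imp p (subst 0 0 (Succ (Var 0 0)) (lift 0 1 p)))))
                    (All 0 p))
(* comprehension:  exists x^{n+1} forall z^n (z \in x <-> p(z)),
   srt(p) <= n+1, x not free in p; z is the type-n variable with index 0 of p *)
| TA_comp n p : S n <= s -> wf s p ->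
    (forall m i, free m i p -> m <= S n) ->
    tiax ext s (Ex (S n) (All n (Iff (Mem n (Var n 0) (Var (S n) 0))
                                     (lift (S n) 0 p))))
| TA_ext n : ext = true -> S n <= s ->
    tiax ext s (Imp (All n (Iff (Mem n (Var n 0) (Var (S n) 0))
                                (Mem n (Var n 0) (Var (S n) 1))))
                    (Eq (S n) (Var (S n) 0) (Var (S n) 1))).

Inductive Prov (ext : bool) (s : nat) : form -> Prop :=
| P_log p : logax p -> wf s p -> Prov ext s p
| P_ax p : tiax ext s p -> wf s p -> Prov ext s p
| P_mp p q : Prov ext s p -> Prov ext s (Imp p q) -> Prov ext s q
| P_gen n p : n <= s -> Prov ext s p -> Prov ext s (All n p).

Definition TI_prov (s : nat) (p : form) : Prop := Prov true s p.
Definition TIstar_prov (s : nat) (p : form) : Prop := Prov false s p.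

Fixpoint approx (n : nat) (t u : tm) : form :=
  match n with
  | 0 => Eq 0 t u
  | S k =>
      And
        (All k (Imp (Mem k (Var k 0) (lift_tm k 0 t))
                    (Ex k (And (Mem k (Var k 0) (lift_tm k 0 (lift_tm k 0 u)))
                               (approx k (Var k 1) (Var k 0))))))
        (All k (Imp (Mem k (Var k 0) (lift_tm k 0 u))
                    (Ex k (And (Mem k (Var k 0) (lift_tm k 0 (lift_tm k 0 t)))
                               (approx k (Var k 1) (Var k 0))))))
  end.

Fixpoint trans (p : form) : form :=
  match p with
  | Eq n t u => approx n t u
  | Mem n t u => Ex n (And (Mem n (Var n 0) (lift_tm n 0 u))
                           (approx n (Var n 0) (lift_tm n 0 t)))
  | Bot => Bot
  | And p q => And (trans p) (trans q)
  | Or p q => Or (trans p) (trans q)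
  | Imp p q => Imp (trans p) (trans q)
  | All n p => All n (trans p)
  | Ex n p => Ex n (trans p)
  end.

(* Main.v *)
Require Import Defs.
From Stdlib Require Import Arith Bool List Lia.
Import ListNotations.


Lemma eqbSn a : Nat.eqb (S a) a = false.
Proof. apply Nat.eqb_neq; lia. Qed.
Lemma eqbnS a : Nat.eqb a (S a) = false.
Proof. apply Nat.eqb_neq; lia. Qed.

Ltac dec := repeat match goal with
 | |- context [Nat.eqb ?a ?b] => destruct (Nat.eqb_spec a b)
 | |- context [Nat.leb ?a ?b] => destruct (Nat.leb_spec a b)
 | |- context [Nat.ltb ?a ?b] => destruct (Nat.ltb_spec a b)
 end.
Ltac crush := repeat (cbn [lift_tm subst_tm andb Nat.pred] in *; dec; subst); try lia; try congruence; auto.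

Lemma tm_ty_lift n m k t : tm_ty n (lift_tm m k t) <-> tm_ty n t.
Proof. revert n; induction t; intros n'; simpl; try tauto.
 - destruct (Nat.eqb n m && Nat.leb k i); simpl; tauto.
 - rewrite IHt; tauto.
 - rewrite IHt1, IHt2; tauto.
 - rewrite IHt1, IHt2; tauto.
Qed.

Lemma tm_ty_subst n m k r t : tm_ty n t -> tm_ty m r -> tm_ty n (subst_tm m k r t).
Proof. revert n; induction t; intros n' H1 H2; simpl in *; try tauto.
 - subst. destruct (Nat.eqb_spec n' m); subst; simpl; auto.
   destruct (i =? k); auto. destruct (k <? i); simpl; auto.
 - intuition.
 - intuition.
 - intuition.
Qed.

Lemma lift_tm_other n m j t : tm_ty n t -> m <> n -> lift_tm m j t = t.
Proof. revert n; induction t; intros n' H1 H2; simpl in *; subst; try tauto.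
 - destruct (Nat.eqb_spec n' m); subst; simpl; congruence.
 - destruct H1; subst. rewrite (IHt 0); auto.
 - destruct H1 as [? [? ?]]; subst. rewrite (IHt1 0), (IHt2 0); auto.
 - destruct H1 as [? [? ?]]; subst. rewrite (IHt1 0), (IHt2 0); auto.
Qed.

Lemma subst_tm_other n m j r t : tm_ty n t -> m <> n -> subst_tm m j r t = t.
Proof. revert n; induction t; intros n' H1 H2; simpl in *; subst; try tauto.
 - destruct (Nat.eqb_spec n' m); subst; simpl; congruence.
 - destruct H1; subst. rewrite (IHt 0); auto.
 - destruct H1 as [? [? ?]]; subst. rewrite (IHt1 0), (IHt2 0); auto.
 - destruct H1 as [? [? ?]]; subst. rewrite (IHt1 0), (IHt2 0); auto.
Qed.

Lemma lift_tm_comm_same m j k t : k <= j -> lift_tm m (S j) (lift_tm m k t) = lift_tm m k (lift_tm m j t).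
Proof. intros; induction t; simpl; try congruence. crush. Qed.

Lemma lift_tm_comm_diff m m' j k t : m <> m' -> lift_tm m j (lift_tm m' k t) = lift_tm m' k (lift_tm m j t).
Proof. intros; induction t; simpl; try congruence. crush. Qed.

Lemma lift_tm_comm0 m k j t : lift_tm m (if Nat.eqb k m then S j else j) (lift_tm k 0 t) = lift_tm k 0 (lift_tm m j t).
Proof. destruct (Nat.eqb_spec k m). subst; apply lift_tm_comm_same; lia. apply lift_tm_comm_diff; auto. Qed.

Lemma subst_lift_comm_same m j k r t : k <= j -> subst_tm m (S j) (lift_tm m k r) (lift_tm m k t) = lift_tm m k (subst_tm m j r t).
Proof. intros; induction t; simpl; try congruence. crush; f_equal; lia. Qed.

Lemma subst_lift_comm_diff m j k r t : k <> m -> subst_tm m j (lift_tm k 0 r) (lift_tm k 0 t) = lift_tm k 0 (subst_tm m j r t).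
Proof. intros; induction t; simpl; try congruence. crush. Qed.

Lemma subst_lift_comm0 m k j r t : subst_tm m (if Nat.eqb k m then S j else j) (lift_tm k 0 r) (lift_tm k 0 t) = lift_tm k 0 (subst_tm m j r t).
Proof. destruct (Nat.eqb_spec k m). subst; apply subst_lift_comm_same; lia. apply subst_lift_comm_diff; auto. Qed.

Lemma subst_tm_lift_tm m k r t : subst_tm m k r (lift_tm m k t) = t.
Proof. induction t; simpl; try congruence. crush. Qed.


Lemma approx_lift n : forall m j a b, lift m j (approx n a b) = approx n (lift_tm m j a) (lift_tm m j b).
Proof. induction n; intros; [reflexivity|].
 cbn [approx lift]. rewrite !IHn, !lift_tm_comm0.
 destruct (Nat.eqb_spec n m); subst; cbn [lift_tm];
 repeat rewrite ?Nat.eqb_refl, ?andb_false_r; cbn [andb Nat.leb]; try reflexivity.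
 all: destruct (Nat.eqb_spec n m); try congruence; reflexivity.
Qed.

Lemma approx_subst n : forall m j r a b, subst m j r (approx n a b) = approx n (subst_tm m j r a) (subst_tm m j r b).
Proof. induction n; intros; [reflexivity|].
 cbn [approx subst]. rewrite !IHn, !subst_lift_comm0.
 destruct (Nat.eqb_spec n m); subst; cbn [subst_tm];
 repeat rewrite ?Nat.eqb_refl; cbn [andb Nat.leb Nat.eqb Nat.ltb]; try reflexivity.
 all: destruct (Nat.eqb_spec n m); try congruence; reflexivity.
Qed.

Lemma trans_lift p : forall m j, trans (lift m j p) = lift m j (trans p).
Proof. induction p; intros; cbn [trans lift]; try rewrite ?IHp, ?IHp1, ?IHp2; try reflexivity.
 - rewrite approx_lift; reflexivity.
 - rewrite approx_lift, !lift_tm_comm0.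
   destruct (Nat.eqb_spec n m); subst; cbn [lift_tm];
   repeat rewrite ?Nat.eqb_refl, ?andb_false_r; cbn [andb Nat.leb]; try reflexivity.
   destruct (Nat.eqb_spec n m); try congruence; reflexivity.
Qed.

Lemma trans_subst p : forall m j r, trans (subst m j r p) = subst m j r (trans p).
Proof. induction p; intros; cbn [trans subst]; try rewrite ?IHp, ?IHp1, ?IHp2; try reflexivity.
 - rewrite approx_subst; reflexivity.
 - rewrite approx_subst, !subst_lift_comm0.
   destruct (Nat.eqb_spec n m); subst; cbn [subst_tm];
   repeat rewrite ?Nat.eqb_refl; cbn [andb Nat.leb Nat.eqb Nat.ltb]; try reflexivity.
   destruct (Nat.eqb_spec n m); try congruence; reflexivity.
Qed.

Lemma wf_lift s p : forall m k, wf s (lift m k p) <-> wf s p.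
Proof. induction p; intros; cbn [wf lift]; rewrite ?tm_ty_lift, ?IHp, ?IHp1, ?IHp2; tauto. Qed.

Lemma wf_subst s p : forall m k r, tm_ty m r -> wf s p -> wf s (subst m k r p).
Proof. induction p; intros m k r Hr H; cbn [wf subst] in *; intuition auto using tm_ty_subst.
 all: apply IHp; auto; apply tm_ty_lift; auto.
Qed.

Lemma wf_approx s n : forall a b, n <= s -> tm_ty n a -> tm_ty n b -> wf s (approx n a b).
Proof. induction n; intros a b H1 H2 H3; cbn [approx wf]; [tauto|].
 repeat split; try lia; cbn; auto; try apply tm_ty_lift; try apply tm_ty_lift; auto; apply IHn; cbn; auto; lia.
Qed.

Lemma wf_trans s p : wf s p -> wf s (trans p).
Proof. induction p; cbn [wf trans]; intros; intuition auto using wf_approx.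
 all: try (apply tm_ty_lift; auto).
 all: try reflexivity.
 lia. apply wf_approx; cbn; auto; try lia. apply tm_ty_lift; auto.
Qed.

Lemma subst_lift_id_tm m k t : subst_tm m k (Var m k) (lift_tm m (S k) t) = t.
Proof. induction t; crush; f_equal; lia. Qed.

Ltac binder_tac IHp :=
  match goal with |- context [Nat.eqb ?n ?m] =>
    destruct (Nat.eqb_spec n m); subst;
    [ rewrite ?Nat.eqb_refl; cbn [lift_tm andb Nat.leb]; rewrite ?Nat.eqb_refl; cbn [andb Nat.leb]; rewrite ?IHp; reflexivity
    | cbn [lift_tm andb Nat.leb];
      rewrite ?(proj2 (Nat.eqb_neq m n)) by auto; cbn [andb]; rewrite ?IHp; reflexivity ] end.

Lemma subst_lift_id p : forall m k, subst m k (Var m k) (lift m (S k) p) = p.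
Proof. induction p; intros; cbn [subst lift]; rewrite ?subst_lift_id_tm, ?IHp, ?IHp1, ?IHp2; try reflexivity.
 all: binder_tac IHp.
Qed.

Lemma subst_lift2_tm m k t : subst_tm m k (Var m (S k)) (lift_tm m (S k) (lift_tm m (S k) t)) = lift_tm m k t.
Proof. induction t; crush; f_equal; lia. Qed.

Lemma subst_lift2 p : forall m k, subst m k (Var m (S k)) (lift m (S k) (lift m (S k) p)) = lift m k p.
Proof. induction p; intros; cbn [subst lift]; rewrite ?subst_lift2_tm, ?IHp, ?IHp1, ?IHp2; try reflexivity.
 all: binder_tac IHp.
Qed.

Ltac decH := repeat match goal with
 | H : context [Nat.eqb ?a ?b] |- _ => destruct (Nat.eqb_spec a b)
 | H : context [Nat.leb ?a ?b] |- _ => destruct (Nat.leb_spec a b)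
 | H : context [Nat.ltb ?a ?b] |- _ => destruct (Nat.ltb_spec a b)
 end.

Lemma occurs_lift0 m k i a : occurs_tm m (if Nat.eqb k m then S i else i) (lift_tm k 0 a) -> occurs_tm m i a.
Proof. induction a; cbn [occurs_tm lift_tm]; try tauto.
 all: intros H; decH; subst; cbn [andb occurs_tm] in *; intuition lia.
Qed.

Lemma free_approx n : forall m i a b, free m i (approx n a b) -> occurs_tm m i a \/ occurs_tm m i b.
Proof. induction n as [|k IH]; intros m i a b H; [exact H|].
 cbn [approx free] in H.
 destruct H as [[H|H]|[H|H]].
 - destruct H as [H|H]; [cbn in H; destruct (Nat.eqb_spec k m); lia|]. left; eapply occurs_lift0; eauto.
 - destruct H as [[H|H]|H]; [cbn in H; destruct (Nat.eqb_spec k m); lia| |].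
   + right; do 2 eapply occurs_lift0; eauto.
   + apply IH in H; destruct H as [H|H]; cbn in H; destruct (Nat.eqb_spec k m); lia.
 - destruct H as [H|H]; [cbn in H; destruct (Nat.eqb_spec k m); lia|]. right; eapply occurs_lift0; eauto.
 - destruct H as [[H|H]|H]; [cbn in H; destruct (Nat.eqb_spec k m); lia| |].
   + left; do 2 eapply occurs_lift0; eauto.
   + apply IH in H; destruct H as [H|H]; cbn in H; destruct (Nat.eqb_spec k m); lia.
Qed.

Lemma free_trans p : forall m i, free m i (trans p) -> free m i p.
Proof. induction p; intros m i H; cbn [trans free] in *; try (destruct H as [H|H]; [left|right]; eauto; fail); auto.
 - apply free_approx in H; auto.
 - destruct H as [[H|H]|H]; [cbn in H; destruct (Nat.eqb_spec n m); lia| |].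
   + right; eapply occurs_lift0; eauto.
   + apply free_approx in H; destruct H as [H|H]; [cbn in H; destruct (Nat.eqb_spec n m); lia|].
     left; eapply occurs_lift0; eauto.
Qed.


Notation Pv s := (Prov false s).

Lemma prov_wf e s p : Prov e s p -> wf s p.
Proof. induction 1; cbn in *; intuition. Qed.

Lemma pK s p q : Pv s p -> wf s q -> Pv s (Imp q p).
Proof. intros H Hq. eapply P_mp; [exact H|]. apply P_log; [constructor|]. cbn; pose proof (prov_wf _ _ _ H); tauto. Qed.

Lemma pI s p : wf s p -> Pv s (Imp p p).
Proof. intros Hp. eapply P_mp; [apply P_log; [apply (LA1 p p)|cbn; tauto]|].
 eapply P_mp; [apply P_log; [apply (LA1 p (Imp p p))|cbn; tauto]|].
 apply P_log; [apply (LA2 p (Imp p p) p)|cbn; tauto]. Qed.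

Lemma pSyl s p q r : Pv s (Imp p q) -> Pv s (Imp q r) -> Pv s (Imp p r).
Proof. intros H1 H2. pose proof (prov_wf _ _ _ H1). pose proof (prov_wf _ _ _ H2). cbn in *.
 eapply P_mp; [exact H1|]. apply (P_mp _ _ (Imp p (Imp q r))); [apply pK; [exact H2|tauto]|].
 apply P_log; [apply LA2|cbn; tauto]. Qed.

Fixpoint cimp (G : list form) (r : form) : form :=
  match G with [] => r | a :: G => cimp G (Imp a r) end.

Definition wfc s G := Forall (wf s) G.

Lemma cimp_wf s G : forall r, wf s (cimp G r) <-> wfc s G /\ wf s r.
Proof. unfold wfc; induction G; intros r; cbn.
 - split; [split; auto|tauto].
 - rewrite IHG; cbn. rewrite Forall_cons_iff. tauto.
Qed.

Lemma cwfc s G r : Pv s (cimp G r) -> wfc s G.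
Proof. intros H; apply prov_wf, cimp_wf in H; tauto. Qed.
Lemma cwfr s G r : Pv s (cimp G r) -> wf s r.
Proof. intros H; apply prov_wf, cimp_wf in H; tauto. Qed.

Lemma cmono s G : forall X Y, Pv s (Imp X Y) -> Pv s (cimp G X) -> Pv s (cimp G Y).
Proof. induction G as [|a G IH]; intros X Y H1 H2; cbn in *.
 - eapply P_mp; eauto.
 - eapply IH; [|exact H2]. pose proof (cwfr _ _ _ H2) as Hw; pose proof (prov_wf _ _ _ H1); cbn in *.
   apply (P_mp _ _ (Imp a (Imp X Y))); [apply pK; [exact H1|tauto]|]. apply P_log; [apply LA2|cbn; tauto].
Qed.

Lemma cmono2 s G : forall X Y Z, Pv s (Imp X (Imp Y Z)) -> Pv s (cimp G X) -> Pv s (cimp G Y) -> Pv s (cimp G Z).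
Proof. induction G as [|a G IH]; intros X Y Z H1 H2 H3; cbn in *.
 - eapply P_mp; [exact H3|]; eapply P_mp; [exact H2|exact H1].
 - pose proof (cwfr _ _ _ H2) as Hw; pose proof (cwfr _ _ _ H3) as Hw'; pose proof (prov_wf _ _ _ H1); cbn in *.
   eapply IH; [|exact H2|exact H3].
   eapply pSyl.
   + apply (P_mp _ _ (Imp a (Imp X (Imp Y Z)))); [apply pK; [exact H1|tauto]|]. apply P_log; [apply LA2|cbn; tauto].
   + apply P_log; [apply LA2|cbn; tauto].
Qed.

Lemma cax s G p : Pv s p -> wfc s G -> Pv s (cimp G p).
Proof. revert p; induction G as [|a G IH]; intros p H HG; cbn; auto.
 inversion HG; subst. apply IH; auto. apply pK; auto. Qed.

Lemma cmp s G X Y : Pv s (cimp G (Imp X Y)) -> Pv s (cimp G X) -> Pv s (cimp G Y).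
Proof. intros H1 H2. eapply cmono2; [|exact H1|exact H2]. apply pI. apply (cwfr _ _ _ H1). Qed.

Lemma cweak s G p a : Pv s (cimp G p) -> wf s a -> Pv s (cimp (a :: G) p).
Proof. intros H Ha. cbn. eapply cmono; [|exact H]. apply P_log; [apply LA1|]. cbn. pose proof (cwfr _ _ _ H). tauto. Qed.

Lemma chyp s G p : In p G -> wfc s G -> Pv s (cimp G p).
Proof. induction G as [|a G IH]; intros Hin HG; [destruct Hin|]. inversion HG; subst.
 destruct Hin as [<-|Hin].
 - cbn. apply cax; auto. apply pI; auto.
 - apply cweak; auto.
Qed.

Lemma cintro s G a r : Pv s (cimp (a :: G) r) -> Pv s (cimp G (Imp a r)).
Proof. auto. Qed.

Lemma cand_i s G X Y : Pv s (cimp G X) -> Pv s (cimp G Y) -> Pv s (cimp G (And X Y)).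
Proof. intros H1 H2. eapply cmono2; [|exact H1|exact H2]. apply P_log; [apply LA5|].
 pose proof (cwfr _ _ _ H1); pose proof (cwfr _ _ _ H2); cbn; tauto. Qed.

Lemma cand_l s G X Y : Pv s (cimp G (And X Y)) -> Pv s (cimp G X).
Proof. intros H1. eapply cmono; [|exact H1]. apply P_log; [apply LA3|].
 pose proof (cwfr _ _ _ H1); cbn in *; tauto. Qed.

Lemma cand_r s G X Y : Pv s (cimp G (And X Y)) -> Pv s (cimp G Y).
Proof. intros H1. eapply cmono; [|exact H1]. apply P_log; [apply LA4|].
 pose proof (cwfr _ _ _ H1); cbn in *; tauto. Qed.

Lemma cor_l s G X Y : Pv s (cimp G X) -> wf s Y -> Pv s (cimp G (Or X Y)).
Proof. intros H1 H. eapply cmono; [|exact H1]. apply P_log; [apply LA6|].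
 pose proof (cwfr _ _ _ H1); cbn in *; tauto. Qed.

Lemma cor_r s G X Y : Pv s (cimp G Y) -> wf s X -> Pv s (cimp G (Or X Y)).
Proof. intros H1 H. eapply cmono; [|exact H1]. apply P_log; [apply LA7|].
 pose proof (cwfr _ _ _ H1); cbn in *; tauto. Qed.

Lemma cor_e s G X Y Z : Pv s (cimp G (Or X Y)) -> Pv s (cimp G (Imp X Z)) -> Pv s (cimp G (Imp Y Z)) -> Pv s (cimp G Z).
Proof. intros H0 H1 H2. eapply cmp; [|exact H0]. eapply cmono2; [|exact H1|exact H2].
 apply P_log; [apply LA8|].
 pose proof (cwfr _ _ _ H1); pose proof (cwfr _ _ _ H2); cbn in *; tauto. Qed.

Lemma call_i s n G : forall p, n <= s -> wfc s G -> Pv s (cimp (map (lift n 0) G) p) -> Pv s (cimp G (All n p)).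
Proof. induction G as [|a G IH]; intros p Hn HG H; cbn in *.
 - apply P_gen; auto.
 - inversion HG; subst.
   assert (Ha' : wf s (lift n 0 a)) by (apply wf_lift; auto).
   pose proof (cwfr _ _ _ H) as Hw; cbn in Hw.
   eapply cmono; [|apply IH; eauto].
   assert (Hwp : wf s p) by tauto.
   set (X := All n (Imp (lift n 0 a) p)).
   change (Pv s (cimp [a; X] (All n p))).
   assert (HG2 : wfc s [a; X]) by (repeat constructor; cbn; auto).
   eapply cmp; [eapply cmp; [apply cax; [apply P_log; [apply (LQ3 n (lift n 0 a) p)|]|]|]|].
   + cbn; tauto.
   + auto.
   + apply chyp; [cbn; auto|auto].
   + eapply cmp; [apply cax; [apply P_log; [apply LQ2|]|]|]; [cbn; tauto|auto|].
     apply chyp; [cbn; auto|auto].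
Qed.

Lemma call_e s G n p t q : Pv s (cimp G (All n p)) -> tm_ty n t -> subst n 0 t p = q -> Pv s (cimp G q).
Proof. intros H Ht <-. eapply cmono; [|exact H]. apply P_log; [apply LQ1; auto|].
 pose proof (cwfr _ _ _ H); cbn in *. split; auto. apply wf_subst; tauto. Qed.

Lemma cex_i s G n p t : tm_ty n t -> n <= s -> Pv s (cimp G (subst n 0 t p)) -> wf s p -> Pv s (cimp G (Ex n p)).
Proof. intros Ht Hn H Hp. eapply cmono; [|exact H]. apply P_log; [apply LQ4; auto|].
 pose proof (cwfr _ _ _ H); cbn in *; tauto. Qed.

Lemma cex_e s G n p q G' q' : n <= s -> Pv s (cimp G (Ex n p)) -> map (lift n 0) G = G' -> lift n 0 q = q' ->
  Pv s (cimp (p :: G') q') -> Pv s (cimp G q).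
Proof. intros Hn H1 <- <- H2. cbn in H2. pose proof (cwfc _ _ _ H1) as HG.
 apply call_i in H2; auto. eapply cmono2; [|exact H2|exact H1].
 pose proof (cwfr _ _ _ H1); pose proof (cwfr _ _ _ H2); cbn in *.
 apply P_log; [apply LQ5|]. cbn in *. split; [tauto|]. split; [tauto|]. apply (wf_lift s q n 0). tauto.
Qed.

Lemma call_i' s n G G' p : n <= s -> wfc s G -> map (lift n 0) G = G' -> Pv s (cimp G' p) -> Pv s (cimp G (All n p)).
Proof. intros; subst; apply call_i; auto. Qed.


Ltac wfauto := repeat (cbn [wf tm_ty trans] in *; match goal with
 | |- _ /\ _ => split
 | |- wf _ (approx _ _ _) => apply wf_approx
 | |- wf _ (lift _ _ _) => apply wf_lift
 | |- wf _ (trans _) => apply wf_trans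
 | |- tm_ty _ (lift_tm _ _ _) => apply tm_ty_lift
 | |- True => exact I
 | |- _ => first [reflexivity | assumption | lia]
 end).

Ltac fsimp := repeat (cbn [subst lift map trans subst_tm lift_tm andb Nat.leb Nat.ltb Nat.pred] ;
  rewrite ?approx_subst, ?approx_lift, ?Nat.eqb_refl, ?eqbSn, ?eqbnS, ?andb_false_r, ?andb_true_r).

Lemma cex_i' s G n p t q : tm_ty n t -> n <= s -> wf s p -> subst n 0 t p = q -> Pv s (cimp G q) -> Pv s (cimp G (Ex n p)).
Proof. intros; subst; eapply cex_i; eauto. Qed.

Lemma tyS_var k t : tm_ty (S k) t -> exists i, t = Var (S k) i.
Proof. destruct t; cbn; intros H; try lia; try (destruct H; lia). subst; eauto. Qed.

Lemma approx_refl s n : forall t, n <= s -> tm_ty n t -> Pv s (approx n t t).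
Proof. induction n as [|k IH]; intros t Hs Ht.
 - apply P_log; [apply LE1; auto|cbn; auto].
 - destruct (tyS_var _ _ Ht) as [i ->]. cbn [approx]. fsimp.
   change (Pv s (cimp [] (And (All k (Imp (Mem k (Var k 0) (Var (S k) i)) (Ex k (And (Mem k (Var k 0) (Var (S k) i)) (approx k (Var k 1) (Var k 0))))))
     (All k (Imp (Mem k (Var k 0) (Var (S k) i)) (Ex k (And (Mem k (Var k 0) (Var (S k) i)) (approx k (Var k 1) (Var k 0))))))))).
   assert (HH : Pv s (cimp [] (All k (Imp (Mem k (Var k 0) (Var (S k) i)) (Ex k (And (Mem k (Var k 0) (Var (S k) i)) (approx k (Var k 1) (Var k 0)))))))).
   { apply call_i; [lia|constructor|]. cbn [map]. apply cintro.
     eapply cex_i' with (t := Var k 0); [reflexivity|lia|wfauto|fsimp; reflexivity|].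
     apply cand_i; [apply chyp; [cbn; auto|repeat constructor; wfauto]|].
     apply cax; [apply IH; [lia|reflexivity]|repeat constructor; wfauto]. }
   apply cand_i; exact HH.
Qed.

Lemma LE2' s n t u p X Y : tm_ty n t -> tm_ty n u -> subst n 0 t p = X -> subst n 0 u p = Y ->
  wf s (Imp (Eq n t u) (Imp X Y)) -> Pv s (Imp (Eq n t u) (Imp X Y)).
Proof. intros; subst; apply P_log; [apply LE2|]; auto. Qed.

Ltac wfc_t := unfold wfc; repeat constructor; wfauto.
Ltac hyp := apply chyp; [cbn; auto 20|wfc_t].

Lemma chyp_n s G i : i < length G -> wfc s G -> Pv s (cimp G (nth i G Bot)).
Proof. intros; apply chyp; auto. apply nth_In; auto. Qed.
Ltac hypn i := match goal with |- Pv ?s (cimp ?G _) =>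
  let H := fresh in pose proof (chyp_n s G i) as H; cbn [nth] in H; apply H; [cbn; lia|first [assumption|wfc_t]] end.

Lemma approx_sym s n : forall t u, n <= s -> tm_ty n t -> tm_ty n u -> Pv s (Imp (approx n t u) (approx n u t)).
Proof. destruct n as [|k]; intros t u Hs Ht Hu.
 - change (Pv s (cimp [Eq 0 t u] (Eq 0 u t))).
   eapply cmp; [eapply cmp; [apply cax; [apply (LE2' s 0 t u (Eq 0 (Var 0 0) (lift_tm 0 0 t)) (Eq 0 t t) (Eq 0 u t)); auto|]|]|].
   + cbn [subst subst_tm]. rewrite !subst_tm_lift_tm. reflexivity.
   + cbn [subst subst_tm]. rewrite !subst_tm_lift_tm. reflexivity.
   + wfauto.
   + wfc_t.
   + hyp.
   + apply cax; [apply (approx_refl s 0); auto|wfc_t].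
 - cbn [approx].
   change (Pv s (cimp [approx (S k) t u] (approx (S k) u t))). cbn [approx].
   assert (wfc s [approx (S k) t u]) by wfc_t.
   apply cand_i; [eapply cand_r|eapply cand_l]; hyp.
Qed.

Definition Hh k t u := All k (Imp (Mem k (Var k 0) (lift_tm k 0 t)) (Ex k (And (Mem k (Var k 0) (lift_tm k 0 (lift_tm k 0 u))) (approx k (Var k 1) (Var k 0))))).

Lemma approx_S k t u : approx (S k) t u = And (Hh k t u) (Hh k u t).
Proof. reflexivity. Qed.

Lemma approx_trans0 s t u v : tm_ty 0 t -> tm_ty 0 u -> tm_ty 0 v ->
  Pv s (Imp (approx 0 t u) (Imp (approx 0 u v) (approx 0 t v))).
Proof. intros Ht Hu Hv. change (Pv s (cimp [Eq 0 u v; Eq 0 t u] (Eq 0 t v))).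
 eapply cmp; [eapply cmp; [apply cax; [apply (LE2' s 0 u v (Eq 0 (lift_tm 0 0 t) (Var 0 0)) (Eq 0 t u) (Eq 0 t v)); auto|]|]|].
 - cbn [subst subst_tm]. rewrite !subst_tm_lift_tm. reflexivity.
 - cbn [subst subst_tm]. rewrite !subst_tm_lift_tm. reflexivity.
 - wfauto.
 - wfc_t.
 - hyp.
 - hyp.
Qed.

Lemma half_trans s k a b c :
  (forall t u v, tm_ty k t -> tm_ty k u -> tm_ty k v -> Pv s (Imp (approx k t u) (Imp (approx k u v) (approx k t v)))) ->
  S k <= s ->
  Pv s (Imp (Hh k (Var (S k) a) (Var (S k) b)) (Imp (Hh k (Var (S k) b) (Var (S k) c)) (Hh k (Var (S k) a) (Var (S k) c)))).
Proof. intros IH Hs. unfold Hh. fsimp.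
 set (T := Var (S k) a). set (U := Var (S k) b). set (V := Var (S k) c).
 set (Htu := All k (Imp (Mem k (Var k 0) T) (Ex k (And (Mem k (Var k 0) U) (approx k (Var k 1) (Var k 0)))))).
 set (Huv := All k (Imp (Mem k (Var k 0) U) (Ex k (And (Mem k (Var k 0) V) (approx k (Var k 1) (Var k 0)))))).
 change (Pv s (cimp [Huv; Htu] (All k (Imp (Mem k (Var k 0) T) (Ex k (And (Mem k (Var k 0) V) (approx k (Var k 1) (Var k 0)))))))).
 assert (Ew : forall j, tm_ty (S k) (Var (S k) j)) by reflexivity.
 eapply call_i' with (G' := [Huv; Htu]); [lia|wfc_t|subst T U V Htu Huv; fsimp; reflexivity|].
 apply cintro.
 eapply cex_e with (n := k) (G' := [Mem k (Var k 1) T; Huv; Htu])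
   (q' := Ex k (And (Mem k (Var k 0) V) (approx k (Var k 2) (Var k 0)))); [lia| | subst T U V Htu Huv; fsimp; reflexivity| subst T U V Htu Huv; fsimp; reflexivity|].
 { eapply cmp; [eapply call_e with (t := Var k 0); [hypn 2|reflexivity|]|hypn 0]. subst T U V Htu Huv; fsimp; reflexivity. }
 eapply cex_e with (n := k) (G' := [And (Mem k (Var k 1) U) (approx k (Var k 2) (Var k 1)); Mem k (Var k 2) T; Huv; Htu])
   (q' := Ex k (And (Mem k (Var k 0) V) (approx k (Var k 3) (Var k 0)))); [lia| | subst T U V Htu Huv; fsimp; reflexivity| subst T U V Htu Huv; fsimp; reflexivity|].
 { eapply cmp; [eapply call_e with (t := Var k 0); [hypn 2|reflexivity|]|eapply cand_l; hypn 0]. subst T U V Htu Huv; fsimp; reflexivity. }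
 eapply cex_i' with (t := Var k 0); [reflexivity|lia|wfauto|subst T U V Htu Huv; fsimp; reflexivity|].
 apply cand_i; [eapply cand_l; hypn 0|].
 eapply cmp; [eapply cmp; [apply cax; [apply (IH (Var k 2) (Var k 1) (Var k 0)); reflexivity|wfc_t]|]|].
 - eapply cand_r; hypn 1.
 - eapply cand_r; hypn 0.
Qed.

Lemma approx_trans s n : forall t u v, n <= s -> tm_ty n t -> tm_ty n u -> tm_ty n v ->
  Pv s (Imp (approx n t u) (Imp (approx n u v) (approx n t v))).
Proof. induction n as [|k IH]; intros t u v Hs Ht Hu Hv; [apply approx_trans0; auto|].
 destruct (tyS_var _ _ Ht) as [a ->]; destruct (tyS_var _ _ Hu) as [b ->]; destruct (tyS_var _ _ Hv) as [c ->].
 assert (IH' : forall t u v, tm_ty k t -> tm_ty k u -> tm_ty k v -> Pv s (Imp (approx k t u) (Imp (approx k u v) (approx k t v))))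
   by (intros; apply IH; auto; lia).
 rewrite !approx_S.
 change (Pv s (cimp [And (Hh k (Var (S k) b) (Var (S k) c)) (Hh k (Var (S k) c) (Var (S k) b)); And (Hh k (Var (S k) a) (Var (S k) b)) (Hh k (Var (S k) b) (Var (S k) a))]
   (And (Hh k (Var (S k) a) (Var (S k) c)) (Hh k (Var (S k) c) (Var (S k) a))))).
 assert (Hw : forall x y, wf s (Hh k (Var (S k) x) (Var (S k) y))) by (intros; unfold Hh; wfauto).
 apply cand_i.
 - eapply cmp; [eapply cmp; [apply cax; [apply (half_trans s k a b c); auto|]|]|].
   + unfold wfc; repeat apply Forall_cons; try apply Forall_nil; cbn [wf]; split; apply Hw.
   + eapply cand_l; hypn 1.
   + eapply cand_l; hypn 0.
 - eapply cmp; [eapply cmp; [apply cax; [apply (half_trans s k c b a); auto|]|]|].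
   + unfold wfc; repeat apply Forall_cons; try apply Forall_nil; cbn [wf]; split; apply Hw.
   + eapply cand_r; hypn 0.
   + eapply cand_r; hypn 1.
Qed.


Lemma liftS0 m j x : lift_tm m (S j) (lift_tm m 0 x) = lift_tm m 0 (lift_tm m j x).
Proof. apply lift_tm_comm_same; lia. Qed.

Ltac fsimp2 := repeat (fsimp; rewrite ?liftS0, ?subst_tm_lift_tm).

Lemma ex_mono s m X Y : m <= s -> wf s X -> wf s Y -> Pv s (Imp (All m (Imp X Y)) (Imp (Ex m X) (Ex m Y))).
Proof. intros Hm HX HY. change (Pv s (cimp [Ex m X; All m (Imp X Y)] (Ex m Y))).
 eapply cex_e with (n := m) (G' := [Ex m (lift m 1 X); All m (lift m 1 (Imp X Y))]) (q' := Ex m (lift m 1 Y)); [lia|hypn 0|cbn [map lift]; rewrite Nat.eqb_refl; reflexivity|cbn [lift]; rewrite Nat.eqb_refl; reflexivity|].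
 eapply cex_i' with (t := Var m 0); [reflexivity|lia|apply wf_lift; auto|apply subst_lift_id|].
 eapply cmp; [eapply call_e with (t := Var m 0); [hypn 2|reflexivity|apply subst_lift_id]|hypn 0].
Qed.

Lemma memL s m a a' b : S m <= s -> tm_ty m a -> tm_ty m a' -> tm_ty (S m) b ->
  Pv s (Imp (approx m a a') (Imp (trans (Mem m a b)) (trans (Mem m a' b)))).
Proof. intros Hs Ha Ha' Hb. cbn [trans].
 change (Pv s (cimp [approx m a a'] (Imp (Ex m (And (Mem m (Var m 0) (lift_tm m 0 b)) (approx m (Var m 0) (lift_tm m 0 a))))
   (Ex m (And (Mem m (Var m 0) (lift_tm m 0 b)) (approx m (Var m 0) (lift_tm m 0 a'))))))).
 eapply cmp; [apply cax; [apply (ex_mono s m (And (Mem m (Var m 0) (lift_tm m 0 b)) (approx m (Var m 0) (lift_tm m 0 a)))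
   (And (Mem m (Var m 0) (lift_tm m 0 b)) (approx m (Var m 0) (lift_tm m 0 a')))); [lia|wfauto|wfauto]|wfc_t]|].
 eapply call_i' with (G' := [approx m (lift_tm m 0 a) (lift_tm m 0 a')]); [lia|wfc_t|cbn [map]; rewrite approx_lift; reflexivity|].
 apply cintro. apply cand_i; [eapply cand_l; hypn 0|].
 eapply cmp; [eapply cmp; [apply cax; [apply (approx_trans s m (Var m 0) (lift_tm m 0 a) (lift_tm m 0 a'))|wfc_t]|]|].
 - lia. - reflexivity. - apply tm_ty_lift; eauto. - apply tm_ty_lift; eauto.
 - eapply cand_r; hypn 0.
 - hypn 1.
Qed.

Lemma cand_l_approx s G k t u : Pv s (cimp G (approx (S k) t u)) -> Pv s (cimp G (Hh k t u)).
Proof. rewrite approx_S; apply cand_l. Qed.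
Lemma cand_r_approx s G k t u : Pv s (cimp G (approx (S k) t u)) -> Pv s (cimp G (Hh k u t)).
Proof. rewrite approx_S; apply cand_r. Qed.

Lemma memR s m a b b' : S m <= s -> tm_ty m a -> tm_ty (S m) b -> tm_ty (S m) b' ->
  Pv s (Imp (approx (S m) b b') (Imp (trans (Mem m a b)) (trans (Mem m a b')))).
Proof. intros Hs Ha Hb Hb'. destruct (tyS_var _ _ Hb) as [i ->]; destruct (tyS_var _ _ Hb') as [j ->].
 cbn [trans]. fsimp2.
 set (B := Var (S m) i). set (B' := Var (S m) j).
 assert (TB : tm_ty (S m) B) by reflexivity. assert (TB' : tm_ty (S m) B') by reflexivity.
 set (la := lift_tm m 0 a). set (la2 := lift_tm m 0 la). set (la3 := lift_tm m 0 la2).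
 assert (T1 : tm_ty m la) by (apply tm_ty_lift; auto).
 assert (T2 : tm_ty m la2) by (apply tm_ty_lift; auto).
 assert (T3 : tm_ty m la3) by (apply tm_ty_lift; auto).
 change (Pv s (cimp [Ex m (And (Mem m (Var m 0) B) (approx m (Var m 0) la)); approx (S m) B B'] (Ex m (And (Mem m (Var m 0) B') (approx m (Var m 0) la))))).
 eapply cex_e with (n := m) (p := And (Mem m (Var m 0) B) (approx m (Var m 0) la))
   (G' := [Ex m (And (Mem m (Var m 0) B) (approx m (Var m 0) la2)); approx (S m) B B'])
   (q' := Ex m (And (Mem m (Var m 0) B') (approx m (Var m 0) la2))); [lia|hypn 0|subst B B' la2 la; fsimp2; reflexivity|subst B B' la2 la; fsimp2; reflexivity|].
 eapply cex_e with (n := m) (p := And (Mem m (Var m 0) B') (approx m (Var m 1) (Var m 0)))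
   (G' := [And (Mem m (Var m 1) B) (approx m (Var m 1) la2); Ex m (And (Mem m (Var m 0) B) (approx m (Var m 0) la3)); approx (S m) B B'])
   (q' := Ex m (And (Mem m (Var m 0) B') (approx m (Var m 0) la3))); [lia| |subst B B' la3 la2 la; fsimp2; reflexivity|subst B B' la3 la2 la; fsimp2; reflexivity|].
 { eapply cmp; [eapply call_e with (t := Var m 0); [apply cand_l_approx; hypn 2|reflexivity|]|eapply cand_l; hypn 0].
   subst B B'; fsimp2; reflexivity. }
 eapply cex_i' with (t := Var m 0); [reflexivity|lia|wfauto|subst B B' la3; fsimp2; reflexivity|].
 apply cand_i; [eapply cand_l; hypn 0|].
 eapply cmp; [eapply cmp; [apply cax; [apply (approx_trans s m (Var m 0) (Var m 1) la2); first [lia|reflexivity|auto]|wfc_t]|]|].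
 - eapply cmp; [apply cax; [apply (approx_sym s m (Var m 1) (Var m 0)); first [lia|reflexivity|auto]|wfc_t]|]. eapply cand_r; hypn 0.
 - eapply cand_r; hypn 1.
Qed.


Lemma var_cases N k i t u : tm_ty N t -> tm_ty N u ->
  (subst_tm N k t (Var N i) = t /\ subst_tm N k u (Var N i) = u) \/
  (exists c, tm_ty N c /\ subst_tm N k t (Var N i) = c /\ subst_tm N k u (Var N i) = c).
Proof. intros. cbn [subst_tm]. rewrite Nat.eqb_refl. destruct (Nat.eqb_spec i k); [left; auto|right].
 destruct (Nat.ltb_spec k i); [exists (Var N (pred i))|exists (Var N i)]; cbn [tm_ty]; auto. Qed.

Lemma c_same s A X : wf s A -> wf s X -> Pv s (Imp A (Imp X X)).
Proof. intros; apply pK; [apply pI|]; auto. Qed.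

Lemma c_tt s n t u : n <= s -> tm_ty n t -> tm_ty n u -> Pv s (Imp (approx n t u) (Imp (approx n t t) (approx n u u))).
Proof. intros. apply pK; [apply pK|]; [apply approx_refl|..]; auto; apply wf_approx; auto. Qed.

Lemma c_tc s n t u c : n <= s -> tm_ty n t -> tm_ty n u -> tm_ty n c -> Pv s (Imp (approx n t u) (Imp (approx n t c) (approx n u c))).
Proof. intros. change (Pv s (cimp [approx n t c; approx n t u] (approx n u c))).
 eapply cmp; [eapply cmp; [apply cax; [apply (approx_trans s n u t c); auto|wfc_t]|]|].
 - eapply cmp; [apply cax; [apply (approx_sym s n t u); auto|wfc_t]|]. hypn 1.
 - hypn 0.
Qed.

Lemma c_ct s n t u c : n <= s -> tm_ty n t -> tm_ty n u -> tm_ty n c -> Pv s (Imp (approx n t u) (Imp (approx n c t) (approx n c u))).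
Proof. intros. change (Pv s (cimp [approx n c t; approx n t u] (approx n c u))).
 eapply cmp; [eapply cmp; [apply cax; [apply (approx_trans s n c t u); auto|wfc_t]|]|].
 - hypn 0. - hypn 1.
Qed.

Lemma all_mono_ctx s m A X Y : m <= s ->
  Pv s (Imp (lift m 0 A) (Imp X Y)) -> Pv s (Imp A (All m (Imp X Y))).
Proof. intros Hm H. pose proof (prov_wf _ _ _ H) as W; cbn [wf] in W. destruct W as [HA [HX HY]]. apply wf_lift in HA. change (Pv s (cimp [A] (All m (Imp X Y)))).
 eapply call_i' with (G' := [lift m 0 A]); [auto|wfc_t|reflexivity|].
 eapply cmp; [apply cax; [exact H|wfc_t]|]. hypn 0.
Qed.

Lemma cong_gen s n p : 1 <= n -> n <= s -> wf s p -> forall k t u, tm_ty n t -> tm_ty n u ->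
  Pv s (Imp (approx n t u) (Imp (trans (subst n k t p)) (trans (subst n k u p)))).
Proof. intros Hn1 Hns. induction p as [n0 a b|n0 a b| |p1 IHp1 p2 IHp2|p1 IHp1 p2 IHp2|p1 IHp1 p2 IHp2|n0 p IHp|n0 p IHp]; intros Hw k t u Ht Hu; cbn [wf] in Hw.
 -
   destruct Hw as (Hm & Ha & Hb). cbn [subst trans].
   destruct (Nat.eq_dec n0 n) as [->|Hne].
   + destruct n as [|n']; [lia|].
     destruct (tyS_var _ _ Ha) as [ia ->]; destruct (tyS_var _ _ Hb) as [ib ->].
     destruct (var_cases (S n') k ia t u Ht Hu) as [[E1 E2]|(c & Hc & E1 & E2)];
     destruct (var_cases (S n') k ib t u Ht Hu) as [[E3 E4]|(d & Hd & E3 & E4)];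
     rewrite E1, E2, E3, E4.
     * apply c_tt; auto.
     * apply c_tc; auto.
     * apply c_ct; auto.
     * apply c_same; apply wf_approx; auto.
   + rewrite !(subst_tm_other n0 n _ _ a), !(subst_tm_other n0 n _ _ b) by auto. apply c_same; apply wf_approx; auto.
 -
   destruct Hw as (Hm & Ha & Hb). cbn [subst].
   destruct (Nat.eq_dec n0 n) as [->|Hne].
   + rewrite !(subst_tm_other (S n) n _ _ b) by (auto; lia).
     destruct n as [|n']; [lia|].
     destruct (tyS_var _ _ Ha) as [ia ->].
     destruct (var_cases (S n') k ia t u Ht Hu) as [[E1 E2]|(c & Hc & E1 & E2)]; rewrite E1, E2.
     * apply memL; auto.
     * apply c_same; [apply wf_approx; auto|apply wf_trans; cbn; repeat split; auto; lia].
   + rewrite !(subst_tm_other n0 n _ _ a) by auto.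
     destruct (Nat.eq_dec (S n0) n) as [<-|Hne2].
     * destruct (tyS_var _ _ Hb) as [ib ->].
       destruct (var_cases (S n0) k ib t u Ht Hu) as [[E1 E2]|(c & Hc & E1 & E2)]; rewrite E1, E2.
       -- apply memR; auto.
       -- apply c_same; [apply wf_approx; auto|apply wf_trans; cbn; repeat split; auto; lia].
     * rewrite !(subst_tm_other (S n0) n _ _ b) by auto. apply c_same; [apply wf_approx; auto|apply wf_trans; cbn; repeat split; auto; lia].
 - cbn. apply c_same; [apply wf_approx|]; cbn; auto.
 -
   destruct Hw as [H1 H2]. cbn [subst trans].
   specialize (IHp1 H1 k t u Ht Hu). specialize (IHp2 H2 k t u Ht Hu).
   pose proof (prov_wf _ _ _ IHp1) as W1; pose proof (prov_wf _ _ _ IHp2) as W2; cbn in W1, W2.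
   change (Pv s (cimp [And (trans (subst n k t p1)) (trans (subst n k t p2)); approx n t u] (And (trans (subst n k u p1)) (trans (subst n k u p2))))).
   assert (wfc s [And (trans (subst n k t p1)) (trans (subst n k t p2)); approx n t u]) by (unfold wfc; repeat constructor; cbn; tauto).
   apply cand_i.
   + eapply cmp; [eapply cmp; [apply cax; [exact IHp1|exact H]|hypn 1]|]. eapply cand_l; hypn 0.
   + eapply cmp; [eapply cmp; [apply cax; [exact IHp2|exact H]|hypn 1]|]. eapply cand_r; hypn 0.
 -
   destruct Hw as [H1 H2]. cbn [subst trans].
   specialize (IHp1 H1 k t u Ht Hu). specialize (IHp2 H2 k t u Ht Hu).
   pose proof (prov_wf _ _ _ IHp1) as W1; pose proof (prov_wf _ _ _ IHp2) as W2; cbn in W1, W2.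
   change (Pv s (cimp [Or (trans (subst n k t p1)) (trans (subst n k t p2)); approx n t u] (Or (trans (subst n k u p1)) (trans (subst n k u p2))))).
   assert (wfc s [Or (trans (subst n k t p1)) (trans (subst n k t p2)); approx n t u]) by (unfold wfc; repeat constructor; cbn; tauto).
   eapply cor_e; [hypn 0| |].
   + apply cintro. apply cor_l; [|tauto].
     assert (wfc s [trans (subst n k t p1); Or (trans (subst n k t p1)) (trans (subst n k t p2)); approx n t u]) by (unfold wfc; repeat constructor; cbn; tauto).
     eapply cmp; [eapply cmp; [apply cax; [exact IHp1|auto]|hypn 2]|hypn 0].
   + apply cintro. apply cor_r; [|tauto].
     assert (wfc s [trans (subst n k t p2); Or (trans (subst n k t p1)) (trans (subst n k t p2)); approx n t u]) by (unfold wfc; repeat constructor; cbn; tauto).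
     eapply cmp; [eapply cmp; [apply cax; [exact IHp2|auto]|hypn 2]|hypn 0].
 -
   destruct Hw as [H1 H2]. cbn [subst trans].
   pose proof (IHp1 H1 k u t Hu Ht) as I1. specialize (IHp2 H2 k t u Ht Hu).
   pose proof (prov_wf _ _ _ I1) as W1; pose proof (prov_wf _ _ _ IHp2) as W2; cbn in W1, W2.
   change (Pv s (cimp [trans (subst n k u p1); Imp (trans (subst n k t p1)) (trans (subst n k t p2)); approx n t u] (trans (subst n k u p2)))).
   assert (wfc s [trans (subst n k u p1); Imp (trans (subst n k t p1)) (trans (subst n k t p2)); approx n t u]) by (unfold wfc; repeat constructor; cbn; tauto).
   eapply cmp; [eapply cmp; [apply cax; [exact IHp2|auto]|hypn 2]|].
   eapply cmp; [hypn 1|].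
   eapply cmp; [eapply cmp; [apply cax; [exact I1|auto]|]|hypn 0].
   eapply cmp; [apply cax; [apply (approx_sym s n t u); auto|auto]|hypn 2].
 -
   destruct Hw as [Hm Hp]. cbn [subst trans].
   assert (Ht' : tm_ty n (lift_tm n0 0 t)) by (apply tm_ty_lift; auto).
   assert (Hu' : tm_ty n (lift_tm n0 0 u)) by (apply tm_ty_lift; auto).
   specialize (IHp Hp (if Nat.eqb n0 n then S k else k) _ _ Ht' Hu').
   rewrite <- approx_lift in IHp.
   pose proof (prov_wf _ _ _ IHp) as W; cbn [wf] in W.
   eapply pSyl; [apply (all_mono_ctx s n0); [auto|exact IHp]|].
   apply P_log; [apply LQ3|cbn; tauto].
 -
   destruct Hw as [Hm Hp]. cbn [subst trans].
   assert (Ht' : tm_ty n (lift_tm n0 0 t)) by (apply tm_ty_lift; auto).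
   assert (Hu' : tm_ty n (lift_tm n0 0 u)) by (apply tm_ty_lift; auto).
   specialize (IHp Hp (if Nat.eqb n0 n then S k else k) _ _ Ht' Hu').
   rewrite <- approx_lift in IHp.
   pose proof (prov_wf _ _ _ IHp) as W; cbn [wf] in W.
   eapply pSyl; [apply (all_mono_ctx s n0); [auto|exact IHp]|].
   apply ex_mono; tauto.
Qed.

Lemma cong0 s n p t u : n <= s -> wf s p -> tm_ty n t -> tm_ty n u ->
  Pv s (Imp (approx n t u) (Imp (subst n 0 t (trans p)) (subst n 0 u (trans p)))).
Proof. intros Hn Hp Ht Hu. destruct n as [|n'].
 - apply P_log; [apply LE2; auto|]. cbn. repeat split; auto; try lia; apply wf_subst; auto; apply wf_trans; auto.
 - rewrite <- !trans_subst. apply cong_gen; auto; lia.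
Qed.


Lemma ext_half s n i j : S n <= s ->
  Pv s (Imp (All n (Imp (trans (Mem n (Var n 0) (Var (S n) i))) (trans (Mem n (Var n 0) (Var (S n) j))))) (Hh n (Var (S n) i) (Var (S n) j))).
Proof. intros Hs. unfold Hh. cbn [trans]. fsimp.
 set (A := Var (S n) i). set (B := Var (S n) j).
 set (Ma := Ex n (And (Mem n (Var n 0) A) (approx n (Var n 0) (Var n 1)))).
 set (Mb := Ex n (And (Mem n (Var n 0) B) (approx n (Var n 0) (Var n 1)))).
 change (Pv s (cimp [All n (Imp Ma Mb)] (All n (Imp (Mem n (Var n 0) A) (Ex n (And (Mem n (Var n 0) B) (approx n (Var n 1) (Var n 0)))))))).
 assert (wf s Ma) by (subst Ma A; wfauto). assert (wf s Mb) by (subst Mb B; wfauto).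
 eapply call_i' with (G' := [All n (lift n 1 (Imp Ma Mb))]); [lia|wfc_t|cbn [map lift]; rewrite Nat.eqb_refl; reflexivity|].
 apply cintro.
 assert (HMb : Pv s (cimp [Mem n (Var n 0) A; All n (lift n 1 (Imp Ma Mb))] Mb)).
 { eapply cmp; [eapply call_e with (t := Var n 0); [hypn 1|reflexivity|apply subst_lift_id]|].
   eapply cex_i' with (t := Var n 0); [reflexivity|lia|wfauto|subst A; fsimp; reflexivity|].
   apply cand_i; [hypn 0|apply cax; [apply approx_refl; [lia|reflexivity]|wfc_t]]. }
 eapply cmp; [|exact HMb].
 eapply cmp; [apply cax; [apply (ex_mono s n (And (Mem n (Var n 0) B) (approx n (Var n 0) (Var n 1))) (And (Mem n (Var n 0) B) (approx n (Var n 1) (Var n 0)))); [lia|wfauto|wfauto]|wfc_t]|].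
 apply cax; [|wfc_t]. apply P_gen; [lia|].
 change (Pv s (cimp [And (Mem n (Var n 0) B) (approx n (Var n 0) (Var n 1))] (And (Mem n (Var n 0) B) (approx n (Var n 1) (Var n 0))))).
 apply cand_i; [eapply cand_l; hypn 0|].
 eapply cmp; [apply cax; [apply approx_sym; [lia|reflexivity|reflexivity]|wfc_t]|]. eapply cand_r; hypn 0.
Qed.

Lemma all_and_l s n P Q : n <= s -> wf s P -> wf s Q -> Pv s (Imp (All n (And P Q)) (All n P)).
Proof. intros. apply (P_mp _ _ (All n (Imp (And P Q) P))); [apply P_gen; [auto|apply P_log; [apply (LA3 P Q)|cbn; tauto]]|].
 apply P_log; [apply LQ3|cbn; tauto]. Qed.
Lemma all_and_r s n P Q : n <= s -> wf s P -> wf s Q -> Pv s (Imp (All n (And P Q)) (All n Q)).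
Proof. intros. apply (P_mp _ _ (All n (Imp (And P Q) Q))); [apply P_gen; [auto|apply P_log; [apply (LA4 P Q)|cbn; tauto]]|].
 apply P_log; [apply LQ3|cbn; tauto]. Qed.

Lemma ext_trans s n : S n <= s ->
  Pv s (trans (Imp (All n (Iff (Mem n (Var n 0) (Var (S n) 0)) (Mem n (Var n 0) (Var (S n) 1))))
                    (Eq (S n) (Var (S n) 0) (Var (S n) 1)))).
Proof. intros Hs. unfold Iff. cbn [trans]. rewrite approx_S.
 set (Mx := trans (Mem n (Var n 0) (Var (S n) 0))). set (My := trans (Mem n (Var n 0) (Var (S n) 1))).
 assert (wf s Mx) by (apply wf_trans; cbn; repeat split; auto). assert (wf s My) by (apply wf_trans; cbn; repeat split; auto).
 change (Pv s (cimp [All n (And (Imp Mx My) (Imp My Mx))] (And (Hh n (Var (S n) 0) (Var (S n) 1)) (Hh n (Var (S n) 1) (Var (S n) 0))))).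
 assert (wfc s [All n (And (Imp Mx My) (Imp My Mx))]) by (unfold wfc; apply Forall_cons; [split; [lia|split; split; assumption]|apply Forall_nil]).
 apply cand_i.
 - eapply cmp; [apply cax; [apply ext_half; auto|auto]|].
   eapply cmp; [apply cax; [apply all_and_l; [lia| |]|auto]|hypn 0]; cbn; auto.
 - eapply cmp; [apply cax; [apply ext_half; auto|auto]|].
   eapply cmp; [apply cax; [apply all_and_r; [lia| |]|auto]|hypn 0]; cbn; auto.
Qed.

Lemma comp_trans s n p : S n <= s -> wf s p -> (forall m i, free m i p -> m <= S n) ->
  Pv s (trans (Ex (S n) (All n (Iff (Mem n (Var n 0) (Var (S n) 0)) (lift (S n) 0 p))))).
Proof. intros Hs Hp Hfree. unfold Iff. cbn [trans]. rewrite trans_lift.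
 assert (HP : wf s (trans p)) by (apply wf_trans; auto).
 assert (AX : Pv s (Ex (S n) (All n (And (Imp (Mem n (Var n 0) (Var (S n) 0)) (lift (S n) 0 (trans p))) (Imp (lift (S n) 0 (trans p)) (Mem n (Var n 0) (Var (S n) 0))))))).
 { apply P_ax; [apply (TA_comp false s n (trans p)); auto; intros m i Hf; apply (Hfree m i); apply free_trans; auto|]. wfauto. }
 replace (lift_tm n 0 (Var (S n) 0)) with (Var (S n) 0) by (cbn [lift_tm]; rewrite eqbSn; reflexivity).
 replace (lift_tm n 0 (Var n 0)) with (Var n 1) by (cbn [lift_tm]; rewrite Nat.eqb_refl; reflexivity).
 remember (lift (S n) 0 (trans p)) as L.
 assert (HL : wf s L) by (subst L; apply wf_lift; auto).
 apply (P_mp _ _ (Ex (S n) (All n (And (Imp (Mem n (Var n 0) (Var (S n) 0)) L) (Imp L (Mem n (Var n 0) (Var (S n) 0))))))); [exact AX|].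
 apply (P_mp _ _ (All (S n) (Imp (All n (And (Imp (Mem n (Var n 0) (Var (S n) 0)) L) (Imp L (Mem n (Var n 0) (Var (S n) 0))))) (All n (And (Imp (Ex n (And (Mem n (Var n 0) (Var (S n) 0)) (approx n (Var n 0) (Var n 1)))) L) (Imp L (Ex n (And (Mem n (Var n 0) (Var (S n) 0)) (approx n (Var n 0) (Var n 1)))))))))); [apply P_gen; [lia|]|apply ex_mono; [lia|wfauto|wfauto]].
 change (Pv s (cimp [(All n (And (Imp (Mem n (Var n 0) (Var (S n) 0)) L) (Imp L (Mem n (Var n 0) (Var (S n) 0)))))] (All n (And (Imp (Ex n (And (Mem n (Var n 0) (Var (S n) 0)) (approx n (Var n 0) (Var n 1)))) L) (Imp L (Ex n (And (Mem n (Var n 0) (Var (S n) 0)) (approx n (Var n 0) (Var n 1))))))))).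
 eapply call_i' with (G' := [All n (lift n 1 (And (Imp (Mem n (Var n 0) (Var (S n) 0)) L) (Imp L (Mem n (Var n 0) (Var (S n) 0)))))]); [lia|wfc_t|cbn [map lift]; rewrite ?Nat.eqb_refl; reflexivity|].
 apply cand_i.
 - apply cintro.
   eapply cex_e with (n := n) (p := (And (Mem n (Var n 0) (Var (S n) 0)) (approx n (Var n 0) (Var n 1)))) (G' := [lift n 0 (Ex n (And (Mem n (Var n 0) (Var (S n) 0)) (approx n (Var n 0) (Var n 1)))); All n (lift n 1 (lift n 1 (And (Imp (Mem n (Var n 0) (Var (S n) 0)) L) (Imp L (Mem n (Var n 0) (Var (S n) 0))))))]) (q' := lift n 0 L);
     [lia|hypn 0|cbn [map lift]; rewrite ?Nat.eqb_refl; reflexivity|reflexivity|].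
   assert (H1 : Pv s (cimp [(And (Mem n (Var n 0) (Var (S n) 0)) (approx n (Var n 0) (Var n 1))); lift n 0 (Ex n (And (Mem n (Var n 0) (Var (S n) 0)) (approx n (Var n 0) (Var n 1)))); All n (lift n 1 (lift n 1 (And (Imp (Mem n (Var n 0) (Var (S n) 0)) L) (Imp L (Mem n (Var n 0) (Var (S n) 0))))))] (lift n 1 L))).
   { eapply cmp; [eapply cand_l; eapply call_e with (t := Var n 0) (q := And (Imp (Mem n (Var n 0) (Var (S n) 0)) (lift n 1 L)) (Imp (lift n 1 L) (Mem n (Var n 0) (Var (S n) 0)))); [hypn 2|reflexivity|]|eapply cand_l; hypn 0].
     rewrite subst_lift_id. fsimp. reflexivity. }
   assert (CG : Pv s (Imp (approx n (Var n 0) (Var n 1)) (Imp (lift n 1 L) (lift n 0 L)))).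
   { pose proof (cong0 s n (lift n 1 (lift n 1 (lift (S n) 0 p))) (Var n 0) (Var n 1)) as C.
     rewrite !trans_lift, <- HeqL, subst_lift_id, subst_lift2 in C. apply C; [lia| |reflexivity|reflexivity].
     apply wf_lift, wf_lift, wf_lift; auto. }
   eapply cmp; [eapply cmp; [apply cax; [exact CG|wfc_t]|eapply cand_r; hypn 0]|exact H1].
 - apply cintro.
   assert (HM : Pv s (cimp [L; All n (lift n 1 (And (Imp (Mem n (Var n 0) (Var (S n) 0)) L) (Imp L (Mem n (Var n 0) (Var (S n) 0)))))] (Mem n (Var n 0) (Var (S n) 0)))).
   { eapply cmp; [eapply cand_r; eapply call_e with (t := Var n 0) (q := (And (Imp (Mem n (Var n 0) (Var (S n) 0)) L) (Imp L (Mem n (Var n 0) (Var (S n) 0))))); [hypn 1|reflexivity|apply subst_lift_id]|hypn 0]. }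
   eapply cex_i' with (t := Var n 0); [reflexivity|lia|wfauto|fsimp; reflexivity|].
   apply cand_i; [exact HM|apply cax; [apply approx_refl; [lia|reflexivity]|wfc_t]].
Qed.


Lemma tm_ty_unique t : forall n m, tm_ty n t -> tm_ty m t -> n = m.
Proof. destruct t; cbn; intros; intuition congruence. Qed.

Lemma tm_ty_subst_inv n m k r t : tm_ty n (subst_tm m k r t) -> tm_ty m r -> tm_ty n t.
Proof. revert n; induction t; intros n' H1 H2; cbn [subst_tm tm_ty] in *; try tauto.
 - destruct (Nat.eqb_spec n m); subst.
   + destruct (i =? k). eapply tm_ty_unique; eauto. destruct (k <? i); cbn in H1; auto.
   + cbn in H1; auto.
 - intuition eauto.
 - intuition eauto.
 - intuition eauto.
Qed.

Lemma wf_subst_inv s p : forall m k r, tm_ty m r -> wf s (subst m k r p) -> wf s p.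
Proof. induction p; intros m k r Hr H; cbn [wf subst] in *; intuition eauto using tm_ty_subst_inv.
 all: eapply IHp; [|eauto]; apply tm_ty_lift; eauto.
Qed.

Lemma main_trans s p : Prov true s p -> Pv s (trans p).
Proof. induction 1 as [p Hl Hw|p Ha Hw|p q _ IH1 _ IH2|n p Hn _ IH].
 - pose proof (wf_trans _ _ Hw) as Hw'.
   destruct Hl; cbn [trans Neg] in *; try (apply P_log; [constructor|exact Hw']).
   + rewrite trans_subst in *. apply P_log; [constructor; auto|exact Hw'].
   + rewrite trans_lift in *. apply P_log; [constructor; auto|exact Hw'].
   + rewrite trans_subst in *. apply P_log; [constructor; auto|exact Hw'].
   + rewrite trans_lift in *. apply P_log; [constructor; auto|exact Hw'].
   + apply approx_refl; cbn in Hw; tauto.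
   + cbn [wf] in Hw. destruct Hw as [[Hn [Ht Hu]] [H1 H2]].
     rewrite !trans_subst. apply cong0; auto. eapply wf_subst_inv; eauto.
 - pose proof (wf_trans _ _ Hw) as Hw'.
   destruct Ha; cbn [trans Neg approx] in *; try (apply P_ax; [constructor|exact Hw']).
   + rewrite !trans_subst, !trans_lift in *. apply P_ax; [|exact Hw']. apply TA_ind. apply wf_trans; auto.
   + apply comp_trans; auto.
   + apply ext_trans; auto.
 - cbn [trans] in IH2. exact (P_mp _ _ _ _ IH1 IH2).
 - cbn [trans]. apply P_gen; auto.
Qed.

Lemma trans_iter k m q : trans (Nat.iter k (All m) q) = Nat.iter k (All m) (trans q).
Proof. induction k; [reflexivity|]. rewrite !Nat.iter_succ. cbn [trans]. now rewrite IHk. Qed.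

Lemma gen_iter s k m q : m <= s -> Pv s q -> Pv s (Nat.iter k (All m) q).
Proof. induction k; intros; [exact H0|]. rewrite Nat.iter_succ. apply P_gen; auto. Qed.

Theorem lemma12p1 (s : nat) (phi : form) :
  wf s phi -> TI_prov s phi -> TIstar_prov s (trans (uclose s phi)).
Proof.
 intros Hw H. apply main_trans in H. unfold uclose, TIstar_prov.
 assert (Hl : forall m, In m (seq 0 (S s)) -> m <= s) by (intros m Hm; apply in_seq in Hm; lia).
 induction (seq 0 (S s)) as [|m l IHl]; cbn [fold_right]; auto.
 rewrite trans_iter. apply gen_iter; [apply Hl; left; auto|]. apply IHl. intros; apply Hl; right; auto.
Qed.
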